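(* Let $F\in[0,1]$, $0\le p\le F$, and let $\rho_k=p|\Psi_{00}\rangle\langle\Psi_{00}|+(1-p)\sigma_k\in S_{p,F}$ for $k=1,2$, where $\sigma_1,\sigma_2$ are density operators. Write $\tilde p'_{ij}=p'_{ij}(\sigma_1\otimes\sigma_2)$ and $\tilde F'_{ij}=F'_{ij}(\sigma_1\otimes\sigma_2)$. Then for all $i,j$, $$p'_{ij}(\rho_1\otimes\rho_2)=\frac p2-\frac{p^2}4+(1-p)^2\tilde p'_{ij},\qquad F'_{ij}(\rho_1\otimes\rho_2)=\frac{2pF-p^2+4(1-p)^2\tilde p'_{ij}\tilde F'_{ij}}{2p-p^2+4(1-p)^2\tilde p'_{ij}}.$$
   Context: For qubit registers $(R,T)$, $|\Psi_{ij}\rangle_{RT}=(I_R\otimes(X^iZ^j)_T)\tfrac1{\sqrt2}(|00\rangle+|11\rangle)$. $S_{p,F}$ is the set of two-qubit density operators $\rho$ with $\rho=p|\Psi_{00}\rangle\langle\Psi_{00}|+(1-p)\sigma$ for some density operator $\sigma$ and $\langle\Psi_{00}|\rho|\Psi_{00}\rangle=F$. For two-qubit states $\tau_1$ on $(A_1,B_1)$ and $\tau_2$ on $(A_2,B_2)$: $p'_{ij}(\tau_1\otimes\tau_2)=\mathrm{Tr}[|\Psi_{ij}\rangle\langle\Psi_{ij}|_{A_1A_2}\tau_1\otimes\tau_2]$ and $F'_{ij}(\tau_1\otimes\tau_2)=\frac1{p'_{ij}}\mathrm{Tr}[|\Psi_{ij}\rangle\langle\Psi_{ij}|_{B_1B_2}|\Psi_{ij}\rangle\langle\Psi_{ij}|_{A_1A_2}\tau_1\otimes\tau_2]$.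 The product $\tilde p'_{ij}\tilde F'_{ij}$ denotes $\mathrm{Tr}[|\Psi_{ij}\rangle\langle\Psi_{ij}|_{B_1B_2}|\Psi_{ij}\rangle\langle\Psi_{ij}|_{A_1A_2}\sigma_1\otimes\sigma_2]$. *)

(* Defs.v *)
(* Complex scalars: an arbitrary numClosedFieldType C
   (e.g. the complex numbers R[i] of a real closed field / realType). *)
From mathcomp Require Import all_boot all_order all_algebra.
From mathcomp Require Export mxtens.
Set Implicit Arguments. Unset Strict Implicit. Unset Printing Implicit Defensive.
Import Order.TTheory GRing.Theory Num.Theory.
Local Open Scope ring_scope.

Section Qubits.
Variable C : numClosedFieldType.

Definition adj (m n : nat) (A : 'M[C]_(m, n)) : 'M[C]_(n, m) :=
  map_mx Num.conj (trmx A).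

Definition ket (a : 'I_2) : 'cV[C]_2 := delta_mx a 0.
Definition ket0 : 'cV[C]_2 := ket 0.
Definition ket1 : 'cV[C]_2 := ket 1.

Definition PauliX : 'M[C]_2 := \matrix_(i < 2, j < 2) (if i == j then 0 else 1).
Definition PauliZ : 'M[C]_2 :=
  \matrix_(i < 2, j < 2) (if i == j then (if i == 0 then 1 else -1) else 0).

(* unnormalised |00> + |11> on registers (R,T) *)
Definition phi_plus : 'M[C]_(2 * 2, 1 * 1) := ket0 *t ket0 + ket1 *t ket1.

(* sqrt 2 * |Psi_ij> = (I_R (x) (X^i Z^j)_T) (|00> + |11>) *)
Definition psi_un (i j : 'I_2) : 'M[C]_(2 * 2, 1 * 1) :=
  (1%:M *t (PauliX ^+ i *m PauliZ ^+ j)) *m phi_plus.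

(* |Psi_ij><Psi_ij| = 1/2 (sqrt 2 |Psi_ij>)(sqrt 2 <Psi_ij|) *)
Definition bell (i j : 'I_2) : 'M[C]_(2 * 2) :=
  (1 / 2%:R) *: (psi_un i j *m adj (psi_un i j)).

Definition psd (n : nat) (A : 'M[C]_n) : Prop :=
  forall v : 'cV[C]_n, 0 <= (adj v *m A *m v) 0 0.
Definition density (n : nat) (A : 'M[C]_n) : Prop := psd A /\ \tr A = 1.

Definition fid00 (rho : 'M[C]_(2 * 2)) : C := \tr (bell 0 0 *m rho).

Definition S_pF (p F : C) (rho : 'M[C]_(2 * 2)) : Prop :=
  (exists sigma : 'M[C]_(2 * 2),
      density sigma /\ rho = p *: bell 0 0 + (1 - p) *: sigma)
  /\ fid00 rho = F.

(* Four qubits.  tau1 (x) tau2 lives on ((A1,B1),(A2,B2)) = tau1 *t tau2.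
   SW is the permutation unitary |a1 b1 a2 b2> |-> |a1 a2 b1 b2>. *)
Definition SW : 'M[C]_((2 * 2) * (2 * 2)) :=
  \sum_(a1 < 2) \sum_(b1 < 2) \sum_(a2 < 2) \sum_(b2 < 2)
    (((ket a1 *t ket a2) *t (ket b1 *t ket b2)) *m
      trmx ((ket a1 *t ket b1) *t (ket a2 *t ket b2))).

(* |Psi_ij><Psi_ij|_{A1A2} (x) I_{B1B2}, in the ((A1,B1),(A2,B2)) ordering *)
Definition projA (i j : 'I_2) : 'M[C]_((2 * 2) * (2 * 2)) :=
  adj SW *m (bell i j *t 1%:M) *m SW.
(* I_{A1A2} (x) |Psi_ij><Psi_ij|_{B1B2}, in the ((A1,B1),(A2,B2)) ordering *)
Definition projB (i j : 'I_2) : 'M[C]_((2 * 2) * (2 * 2)) :=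
  adj SW *m (1%:M *t bell i j) *m SW.

Definition pprime (tau1 tau2 : 'M[C]_(2 * 2)) (i j : 'I_2) : C :=
  \tr (projA i j *m (tau1 *t tau2)).
(* Tr[ |Psi_ij><Psi_ij|_{B1B2} |Psi_ij><Psi_ij|_{A1A2} tau1 (x) tau2 ]
   (= p'_{ij} F'_{ij}) *)
Definition pFprime (tau1 tau2 : 'M[C]_(2 * 2)) (i j : 'I_2) : C :=
  \tr (projB i j *m projA i j *m (tau1 *t tau2)).
Definition Fprime (tau1 tau2 : 'M[C]_(2 * 2)) (i j : 'I_2) : C :=
  pFprime tau1 tau2 i j / pprime tau1 tau2 i j.

End Qubits.

(* Main.v *)
Require Import Defs.
From mathcomp Require Import all_boot all_order all_algebra.
From mathcomp Require Import ring.
Import Order.TTheory GRing.Theory Num.Theory.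
Local Open Scope ring_scope.

Notation idx := mxtens_index.
Set Implicit Arguments. Unset Strict Implicit.

Section H.
Variable C : numClosedFieldType.

Notation idx := mxtens_index.

Lemma sum2 (F : 'I_2 -> C) : \sum_(i < 2) F i = F ord0 + F ord_max.
Proof. by rewrite big_ord_recl big_ord1; congr (_ + F _); apply: val_inj. Qed.

Lemma sum_tens m n (F : 'I_(m * n) -> C) :
  \sum_(k < m * n) F k = \sum_(i < m) \sum_(j < n) F (idx (i, j)).
Proof.
rewrite pair_big /= (reindex (@mxtens_index m n)) /=.
  by apply: eq_bigr => -[i j] _.
exists (@mxtens_unindex m n) => k _; [exact: mxtens_indexK | exact: mxtens_unindexK].
Qed.

Lemma tens_delta m n p q (i : 'I_m) (k : 'I_n) (j : 'I_p) (l : 'I_q) :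
  delta_mx i k *t delta_mx j l = delta_mx (idx (i, j)) (idx (k, l)) :> 'M[C]_(_, _).
Proof.
apply/matrixP => x y.
case: (mxtens_indexP x) => x1 x2; case: (mxtens_indexP y) => y1 y2.
rewrite tensmxE !mxE !(inj_eq (can_inj (@mxtens_indexK _ _))) !xpair_eqE.
by case: (x1 == i); case: (x2 == j); case: (y1 == k); case: (y2 == l);
  rewrite /= ?mulr1 ?mulr0 ?mul0r.
Qed.

Lemma adjD m n (A B : 'M[C]_(m, n)) : adj (A + B) = adj A + adj B.
Proof. by apply/matrixP => i j; rewrite !mxE rmorphD. Qed.
Lemma adj0 m n : adj (0 : 'M[C]_(m, n)) = 0.
Proof. by apply/matrixP => i j; rewrite !mxE rmorph0. Qed.
Lemma adj_delta m n (i : 'I_m) (j : 'I_n) : adj (delta_mx i j) = delta_mx j i :> 'M[C]_(_,_).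
Proof. by apply/matrixP => x y; rewrite !mxE rmorph_nat andbC. Qed.

Definition T4 := ('I_2 * 'I_2 * 'I_2 * 'I_2)%type.
Definition Sx (t : T4) : 'I_(2 * 2 * (2 * 2)) :=
  let: (a1, b1, a2, b2) := t in idx (idx (a1, a2), idx (b1, b2)).
Definition Nx (t : T4) : 'I_(2 * 2 * (2 * 2)) :=
  let: (a1, b1, a2, b2) := t in idx (idx (a1, b1), idx (a2, b2)).

Lemma sumT4 (V : nmodType) (F : T4 -> V) : \sum_(t : T4) F t =
  \sum_(a1 < 2) \sum_(b1 < 2) \sum_(a2 < 2) \sum_(b2 < 2) F (a1, b1, a2, b2).
Proof.
symmetry; rewrite pair_big pair_big pair_big /=.
by apply: eq_bigr => -[[[a1 b1] a2] b2] _.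
Qed.


Lemma SW_sum : SW C = \sum_(t : T4) delta_mx (Sx t) (Nx t).
Proof.
rewrite sumT4 /SW; apply: eq_bigr => a1 _; apply: eq_bigr => b1 _;
apply: eq_bigr => a2 _; apply: eq_bigr => b2 _.
by rewrite /ket !tens_delta trmx_delta mul_delta_mx.
Qed.

Lemma adj_sum m n (I : finType) (F : I -> 'M[C]_(m, n)) :
  adj (\sum_i F i) = \sum_i adj (F i).
Proof. exact: (big_morph _ (@adjD m n) (@adj0 m n)). Qed.

Lemma adjSW : adj (SW C) = \sum_(t : T4) delta_mx (Nx t) (Sx t).
Proof. by rewrite SW_sum adj_sum; apply: eq_bigr => t _; rewrite adj_delta. Qed.

Lemma deltaM_entry n m (r k : 'I_n) (s : 'I_m) (X : 'M[C]_m) p :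
  (delta_mx r s *m X) k p = (k == r)%:R * X s p.
Proof.
rewrite mxE (bigD1 s) //= big1 ?addr0 => [|l ls]; rewrite mxE ?eqxx ?andbT //.
by rewrite (negbTE ls) andbF mul0r.
Qed.

Lemma tr_deltaM n (p q : 'I_n) (Y : 'M[C]_n) : \tr (delta_mx p q *m Y) = Y q p.
Proof.
rewrite /mxtrace (bigD1 p) //= big1 ?addr0.
  by rewrite deltaM_entry eqxx mul1r.
by move=> k kp; rewrite deltaM_entry (negbTE kp) mul0r.
Qed.

Lemma tr_delta4 n (p q r s : 'I_n) (M X : 'M[C]_n) :
  \tr (delta_mx p q *m M *m delta_mx r s *m X) = M q r * X s p.
Proof.
rewrite -!mulmxA tr_deltaM mxE (bigD1 r) //= big1 ?addr0.
  by rewrite deltaM_entry eqxx mul1r.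
by move=> k kr; rewrite deltaM_entry (negbTE kr) mul0r mulr0.
Qed.

Lemma tr_main (M X : 'M[C]_(2 * 2 * (2 * 2))) :
  \tr (adj (SW C) *m M *m SW C *m X) =
  \sum_(t : T4) \sum_(u : T4) M (Sx t) (Sx u) * X (Nx u) (Nx t).
Proof.
rewrite adjSW SW_sum !mulmx_suml linear_sum; apply: eq_bigr => t _.
rewrite mulmx_sumr mulmx_suml linear_sum; apply: eq_bigr => u _.
exact: tr_delta4.
Qed.


Lemma idx_inj m n (x y : 'I_m * 'I_n) : idx x = idx y -> x = y.
Proof. by move=> H; rewrite -(mxtens_indexK x) H mxtens_indexK. Qed.

Lemma Nx_inj : injective Nx.
Proof.
move=> [[[a1 b1] a2] b2] [[[c1 d1] c2] d2] /=.
by move/idx_inj/pair_equal_spec => [/idx_inj [-> ->] /idx_inj [-> ->]].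
Qed.

Lemma sum_tensV (V : nmodType) m n (F : 'I_(m * n) -> V) :
  \sum_(k < m * n) F k = \sum_(i < m) \sum_(j < n) F (idx (i, j)).
Proof.
rewrite pair_big /= (reindex (@mxtens_index m n)) /=.
  by apply: eq_bigr => -[i j] _.
exists (@mxtens_unindex m n) => k _; [exact: mxtens_indexK | exact: mxtens_unindexK].
Qed.

Lemma SW_unitary : SW C *m adj (SW C) = 1%:M.
Proof.
rewrite adjSW SW_sum mulmx_suml.
rewrite (eq_bigr (fun t => delta_mx (Sx t) (Sx t))); last first.
  move=> t _; rewrite mulmx_sumr (bigD1 t) //= mul_delta_mx big1 ?addr0 //.
  by move=> u ut; rewrite mul_delta_mx_0 // (inj_eq Nx_inj) eq_sym.
symmetry; rewrite mx1_sum_delta [LHS]sum_tensV.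
rewrite (eq_bigr (fun i : 'I_(2*2) => \sum_(x < 2) \sum_(y < 2)
   delta_mx (idx (i, idx (x, y))) (idx (i, idx (x, y))))); last first.
  by move=> i _; apply: (sum_tensV (fun j : 'I_(2*2) => delta_mx (idx (i, j)) (idx (i, j)))).
rewrite [LHS]sum_tensV sumT4; apply: eq_bigr => a1 _.
rewrite [RHS]exchange_big /=; apply: eq_bigr => a2 _.
by apply: eq_bigr => b1 _; apply: eq_bigr => b2 _.
Qed.


Definition bit (a : 'I_2) : bool := (nat_of_ord a == 1)%N.
Definition fU (i j a b : 'I_2) : C :=
  if bit b == xorb (bit a) (bit i) then (if bit j && bit a then -1 else 1) else 0.

Lemma id_entry n (i j : 'I_n.+1) : (1 : 'M[C]_n.+1) i j = (i == j)%:R.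
Proof. by rewrite mxE. Qed.

Lemma U_entry (i j a b : 'I_2) :
  (PauliX C ^+ i *m PauliZ C ^+ j) b a = fU i j a b.
Proof.
rewrite /fU /bit.
case: i => [[|[|?]] ?] //; case: j => [[|[|?]] ?] //;
case: a => [[|[|?]] ?] //; case: b => [[|[|?]] ?] //=;
rewrite ?expr0 ?expr1 ?mul1mx ?mulmx1 ?id_entry /PauliX /PauliZ ?mxE ?sum2 ?mxE -?val_eqE /=;
  ring.
Qed.


Lemma Mdelta_entry m n p (M : 'M[C]_(m, n)) (r : 'I_n) (s : 'I_p) k l :
  (M *m delta_mx r s) k l = M k r * (l == s)%:R.
Proof.
rewrite mxE (bigD1 r) //= big1 ?addr0 => [|x xr]; rewrite mxE ?eqxx //.
by rewrite (negbTE xr) mulr0.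
Qed.

Lemma I11 (l s : 'I_(1 * 1)) : l == s.
Proof. by case: l s => [[|?] ?] [[|?] ?] //; rewrite -val_eqE. Qed.

Lemma psiE (i j a b : 'I_2) l : psi_un C i j (idx (a, b)) l = fU i j a b.
Proof.
rewrite /psi_un /phi_plus /ket0 /ket1 /ket !tens_delta mulmxDr mxE.
rewrite !Mdelta_entry !tensmxE !I11 !mulr1 !U_entry !mxE.
by case: a => [[|[|?]] ?] //; rewrite -!val_eqE /= ?mul1r ?mul0r ?addr0 ?add0r.
Qed.

Lemma conj_fU i j a b : (fU i j a b)^* = fU i j a b.
Proof.
rewrite /fU; case: ifP => _; last exact: conjC0.
by case: ifP => _; rewrite ?conjCN1 ?conjC1.
Qed.

Lemma bellE (i j a b c d : 'I_2) :
  bell C i j (idx (a, b)) (idx (c, d)) = 1 / 2%:R * (fU i j a b * fU i j c d).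
Proof.
rewrite /bell !mxE big_ord_recl big_ord0 addr0 (psiE i j a b) /adj mxE [trmx _ _ _]mxE (psiE i j c d) conj_fU.
done.
Qed.


Lemma tr_tens (A B X1 X2 : 'M[C]_(2 * 2)) :
  \tr (adj (SW C) *m (A *t B) *m SW C *m (X1 *t X2)) =
  \sum_(a1 < 2) \sum_(b1 < 2) \sum_(a2 < 2) \sum_(b2 < 2)
  \sum_(c1 < 2) \sum_(d1 < 2) \sum_(c2 < 2) \sum_(d2 < 2)
   (A (idx (a1, a2)) (idx (c1, c2)) * B (idx (b1, b2)) (idx (d1, d2)) *
    (X1 (idx (c1, d1)) (idx (a1, b1)) * X2 (idx (c2, d2)) (idx (a2, b2)))).
Proof.
rewrite tr_main sumT4; apply: eq_bigr => a1 _; apply: eq_bigr => b1 _;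
apply: eq_bigr => a2 _; apply: eq_bigr => b2 _.
rewrite sumT4; apply: eq_bigr => c1 _; apply: eq_bigr => d1 _;
apply: eq_bigr => c2 _; apply: eq_bigr => d2 _.
by rewrite /Sx /Nx !tensmxE.
Qed.

Lemma idE (a b c d : 'I_2) :
  (1%:M : 'M[C]_(2 * 2)) (idx (a, b)) (idx (c, d)) = ((bit a == bit c) && (bit b == bit d))%:R.
Proof.
rewrite mxE (inj_eq (can_inj (@mxtens_indexK _ _))) xpair_eqE.
by case: a => [[|[|?]] ?] //; case: b => [[|[|?]] ?] //;
   case: c => [[|[|?]] ?] //; case: d => [[|[|?]] ?] //; rewrite -!val_eqE.
Qed.

Lemma trE (X : 'M[C]_(2 * 2)) : \tr X =
  \sum_(a < 2) \sum_(b < 2) X (idx (a, b)) (idx (a, b)).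
Proof. by rewrite /mxtrace sum_tensV. Qed.

Lemma ordE : ord_enum 2 = [:: ord0; ord_max].
Proof. by apply: (inj_map val_inj); rewrite val_ord_enum. Qed.

Lemma tr_tensF (A B X1 X2 : 'M[C]_(2 * 2)) fA fB :
  (forall a b c d, A (idx (a, b)) (idx (c, d)) = fA a b c d) ->
  (forall a b c d, B (idx (a, b)) (idx (c, d)) = fB a b c d) ->
  \tr (adj (SW C) *m (A *t B) *m SW C *m (X1 *t X2)) =
  \sum_(a1 < 2) \sum_(b1 < 2) \sum_(a2 < 2) \sum_(b2 < 2)
  \sum_(c1 < 2) \sum_(d1 < 2) \sum_(c2 < 2) \sum_(d2 < 2)
   (fA a1 a2 c1 c2 * fB b1 b2 d1 d2 *
    (X1 (idx (c1, d1)) (idx (a1, b1)) * X2 (idx (c2, d2)) (idx (a2, b2)))).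
Proof.
move=> HA HB; rewrite tr_tens; apply: eq_bigr => a1 _; apply: eq_bigr => b1 _;
apply: eq_bigr => a2 _; apply: eq_bigr => b2 _.
apply: eq_bigr => c1 _; apply: eq_bigr => d1 _;
apply: eq_bigr => c2 _; apply: eq_bigr => d2 _.
by rewrite HA HB.
Qed.

Definition fB (i j a b c d : 'I_2) : C := 1 / 2%:R * (fU i j a b * fU i j c d).
Definition fI (a b c d : 'I_2) : C := ((bit a == bit c) && (bit b == bit d))%:R.

Ltac expand_all i j :=
  rewrite unlock /=; rewrite /index_enum /=; rewrite unlock /=; rewrite ordE /=;
  rewrite ?bellE;
  case: i => [[|[|?]] ?] //; case: j => [[|[|?]] ?] //; rewrite /fB /fI /fU /bit /=;
  by field.

Lemma pA (i j : 'I_2) (tau : 'M[C]_(2 * 2)) :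
  pprime (bell C 0 0) tau i j = \tr tau / 4%:R.
Proof.
rewrite /pprime /projA (tr_tensF _ _ (fA := fB i j) (fB := fI)) ?trE; last first.
  exact: idE. exact: bellE.
expand_all i j.
Qed.

Lemma pB (i j : 'I_2) (tau : 'M[C]_(2 * 2)) :
  pprime tau (bell C 0 0) i j = \tr tau / 4%:R.
Proof.
rewrite /pprime /projA (tr_tensF _ _ (fA := fB i j) (fB := fI)) ?trE; last first.
  exact: idE. exact: bellE.
expand_all i j.
Qed.

Lemma pF_eq (i j : 'I_2) (t1 t2 : 'M[C]_(2 * 2)) :
  pFprime t1 t2 i j = \tr (adj (SW C) *m (bell C i j *t bell C i j) *m SW C *m (t1 *t t2)).
Proof.
rewrite /pFprime /projB /projA.
have -> : adj (SW C) *m (1%:M *t bell C i j) *m SW C *m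
     (adj (SW C) *m (bell C i j *t 1%:M) *m SW C) =
   adj (SW C) *m ((1%:M *t bell C i j) *m (bell C i j *t 1%:M)) *m SW C.
  by rewrite !mulmxA -[_ *m SW C *m adj (SW C)]mulmxA SW_unitary mulmx1.
by rewrite tensmx_mul mul1mx mulmx1.
Qed.

Lemma fidE (tau : 'M[C]_(2 * 2)) : fid00 tau =
  \sum_(a < 2) \sum_(b < 2) \sum_(c < 2) \sum_(d < 2)
    bell C 0 0 (idx (a, b)) (idx (c, d)) * tau (idx (c, d)) (idx (a, b)).
Proof.
rewrite /fid00 trE; apply: eq_bigr => a _; apply: eq_bigr => b _.
by rewrite mxE sum_tensV.
Qed.

Lemma fA (i j : 'I_2) (tau : 'M[C]_(2 * 2)) :
  pFprime (bell C 0 0) tau i j = fid00 tau / 4%:R.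
Proof.
rewrite pF_eq (tr_tensF _ _ (fA := fB i j) (fB := fB i j)) ?fidE; try exact: bellE.
expand_all i j.
Qed.

Lemma fBl (i j : 'I_2) (tau : 'M[C]_(2 * 2)) :
  pFprime tau (bell C 0 0) i j = fid00 tau / 4%:R.
Proof.
rewrite pF_eq (tr_tensF _ _ (fA := fB i j) (fB := fB i j)) ?fidE; try exact: bellE.
expand_all i j.
Qed.

Lemma tr_bell : \tr (bell C 0 0) = 1.
Proof.
rewrite trE unlock /=; rewrite /index_enum /=; rewrite unlock /=; rewrite ordE /=.
rewrite !bellE /fU /bit /=; by field.
Qed.

Lemma fid_bell : fid00 (bell C 0 0) = 1.
Proof.
rewrite fidE unlock /=; rewrite /index_enum /=; rewrite unlock /=; rewrite ordE /=.
rewrite !bellE /fU /bit /=; by field.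
Qed.


Lemma tensDl (A B Z : 'M[C]_(2 * 2)) : (A + B) *t Z = A *t Z + B *t Z.
Proof. by apply/matrixP => x y; rewrite !mxE mulrDl. Qed.
Lemma tensDr (A B Z : 'M[C]_(2 * 2)) : Z *t (A + B) = Z *t A + Z *t B.
Proof. by apply/matrixP => x y; rewrite !mxE mulrDr. Qed.
Lemma tensZl (x : C) (A Z : 'M[C]_(2 * 2)) : (x *: A) *t Z = x *: (A *t Z).
Proof. by apply/matrixP => u v; rewrite !mxE mulrA. Qed.
Lemma tensZr (x : C) (A Z : 'M[C]_(2 * 2)) : Z *t (x *: A) = x *: (Z *t A).
Proof. by apply/matrixP => u v; rewrite !mxE mulrCA. Qed.

Lemma lin_l (P : 'M[C]_(2 * 2 * (2 * 2))) x y (A B Z : 'M[C]_(2 * 2)) :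
  \tr (P *m ((x *: A + y *: B) *t Z)) = x * \tr (P *m (A *t Z)) + y * \tr (P *m (B *t Z)).
Proof. by rewrite tensDl !tensZl mulmxDr -!scalemxAr mxtraceD !mxtraceZ. Qed.
Lemma lin_r (P : 'M[C]_(2 * 2 * (2 * 2))) x y (A B Z : 'M[C]_(2 * 2)) :
  \tr (P *m (Z *t (x *: A + y *: B))) = x * \tr (P *m (Z *t A)) + y * \tr (P *m (Z *t B)).
Proof. by rewrite tensDr !tensZr mulmxDr -!scalemxAr mxtraceD !mxtraceZ. Qed.
Lemma fid_lin x y (A B : 'M[C]_(2 * 2)) : fid00 (x *: A + y *: B) = x * fid00 A + y * fid00 B.
Proof. by rewrite /fid00 mulmxDr -!scalemxAr mxtraceD !mxtraceZ. Qed.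

Lemma divq (a b N D : C) : a = N / 4%:R -> b = D / 4%:R -> a / b = N / D.
Proof.
move=> -> ->; have [->|D0] := eqVneq D 0; first by rewrite mul0r invr0 !mulr0.
by field; rewrite D0.
Qed.

End H.

Unset Implicit Arguments. Set Strict Implicit.

Theorem lemma5 (C : numClosedFieldType) (F p : C)
  (sigma1 sigma2 rho1 rho2 : 'M[C]_(2 * 2)) :
  0 <= F -> F <= 1 -> 0 <= p -> p <= F ->
  density sigma1 -> density sigma2 ->
  rho1 = p *: bell C 0 0 + (1 - p) *: sigma1 ->
  rho2 = p *: bell C 0 0 + (1 - p) *: sigma2 ->
  S_pF p F rho1 -> S_pF p F rho2 ->
  forall i j : 'I_2,
    pprime rho1 rho2 i j
      = p / 2%:R - p ^+ 2 / 4%:R + (1 - p) ^+ 2 * pprime sigma1 sigma2 i j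
    /\ Fprime rho1 rho2 i j
      = (2%:R * p * F - p ^+ 2 + 4%:R * (1 - p) ^+ 2 * pFprime sigma1 sigma2 i j)
        / (2%:R * p - p ^+ 2 + 4%:R * (1 - p) ^+ 2 * pprime sigma1 sigma2 i j).
Proof.
move=> _ _ _ _ [_ tr1] [_ tr2] E1 E2 [_ F1] [_ F2] i j.
have H1 : p * 1 + (1 - p) * fid00 sigma1 = F by rewrite -F1 E1 fid_lin fid_bell.
have H2 : p * 1 + (1 - p) * fid00 sigma2 = F by rewrite -F2 E2 fid_lin fid_bell.
have PP : pprime rho1 rho2 i j =
  p * (p * pprime (bell C 0 0) (bell C 0 0) i j + (1 - p) * pprime (bell C 0 0) sigma2 i j)
  + (1 - p) * (p * pprime sigma1 (bell C 0 0) i j + (1 - p) * pprime sigma1 sigma2 i j).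
  by rewrite E1 E2 /pprime lin_l !lin_r.
have FF : pFprime rho1 rho2 i j =
  p * (p * pFprime (bell C 0 0) (bell C 0 0) i j + (1 - p) * pFprime (bell C 0 0) sigma2 i j)
  + (1 - p) * (p * pFprime sigma1 (bell C 0 0) i j + (1 - p) * pFprime sigma1 sigma2 i j).
  by rewrite E1 E2 /pFprime lin_l !lin_r.
rewrite !pA pB tr_bell tr1 tr2 in PP.
rewrite !fA fBl fid_bell in FF.
split; first by rewrite PP; field.
rewrite /Fprime; apply: divq; last by rewrite PP; field.
rewrite FF.
have -> : F = ((p * 1 + (1 - p) * fid00 sigma1) + (p * 1 + (1 - p) * fid00 sigma2)) / 2%:R.
  by rewrite H1 H2; field.
by field.
Qed.
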